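(* Let $N, N_y, M \in \mathbb{N}$, $X \in \mathbb{R}^{N \times M}$, $Y \in \mathbb{R}^{N_y \times M}$, $\lambda \ge 0$, and $\Omega = \{1,\dots,N\}$. For $S\subset\Omega$ with $X_SX_S^\top + \lambda I_{|S|} \succ 0$ let $J(S) = \operatorname{tr}\{ Y X_S^\top (X_S X_S^\top + \lambda I_{|S|})^{-1} X_S Y^\top \}$, with $J(\emptyset)=0$. Then for any $S \subset \Omega$ and $i \in \Omega\setminus S$ such that $P^{xx}_{S\cup\{i\},S\cup\{i\}} \succ 0$, \[ J(S\cup\{i\}) - J(S) = \frac{\| (Q^{xy}_i(S))^\top \|^2}{Q^{xx}_{i,i}(S)}. \]
   Context: Notation: for a matrix $A$ and an ordered index set $S=\{S_1,\dots,S_k\}$, $A_S$ is the matrix whose $j$th row is row $S_j$ of $A$; $A_{S,S}$ is the $k\times k$ matrix with $(j,l)$ entry $A_{S_j,S_l}$; $A_i$ is row $i$ of $A$, $A_{i,i}$ its $(i,i)$ entry; $\|\cdot\|$ is the Euclidean norm. Define $P^{xx} = XX^\top + \lambda I_N$ (so $P^{xx}_{S,S} = X_SX_S^\top+\lambda I_{|S|}$), $P^{xy} = XY^\top$. Define $Q^{xx}(\emptyset)=P^{xx}$, $Q^{xy}(\emptyset)=P^{xy}$, and for $|S|\ge1$ with $P^{xx}_{S,S}\succ0$: $Q^{xx}(S) = P^{xx} - (P^{xx}_S)^\top (P^{xx}_{S,S})^{-1} P^{xx}_S$, $Q^{xy}(S) = P^{xy} - (P^{xx}_S)^\top (P^{xx}_{S,S})^{-1}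 P^{xy}_S$. *)

(* Defs.v *)
From HB Require Import structures.
From mathcomp Require Import all_boot all_order all_algebra.
Set Implicit Arguments. Unset Strict Implicit. Unset Printing Implicit Defensive.
Import Order.TTheory GRing.Theory Num.Theory.
Local Open Scope ring_scope.

Definition posdef (R : realFieldType) (n : nat) (A : 'M[R]_n) : Prop :=
  A^T = A /\ forall v : 'cV[R]_n, v != 0 -> 0 < (v^T *m A *m v) 0 0.

(* A_S : rows of A indexed by S, in the increasing order of enum S. *)
Definition rows_of (R : Type) (N m : nat) (S : {set 'I_N}) (A : 'M[R]_(N, m))
  : 'M[R]_(#|S|, m) := rowsub (fun j : 'I_#|S| => enum_val j) A.

Definition subsq (R : Type) (N : nat) (S : {set 'I_N}) (A : 'M[R]_N)
  : 'M[R]_#|S| := mxsub (fun j : 'I_#|S| => enum_val j)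
                        (fun j : 'I_#|S| => enum_val j) A.

Section Defs.
Variables (R : realFieldType) (N Ny M : nat).
Variables (X : 'M[R]_(N, M)) (Y : 'M[R]_(Ny, M)) (lambda : R).

Definition Pxx : 'M[R]_N := X *m X^T + lambda%:M.
Definition Pxy : 'M[R]_(N, Ny) := X *m Y^T.

(* J(S) = tr( Y X_S^T (X_S X_S^T + lambda I)^{-1} X_S Y^T );
   for S = set0 all matrices are empty and J(set0) = 0. *)
Definition J (S : {set 'I_N}) : R :=
  \tr (Y *m (rows_of S X)^T
         *m invmx (rows_of S X *m (rows_of S X)^T + lambda%:M)
         *m rows_of S X *m Y^T).

(* Q^{xx}(S), Q^{xy}(S); for S = set0 they reduce to Pxx, Pxy. *)
Definition Qxx (S : {set 'I_N}) : 'M[R]_N :=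
  Pxx - (rows_of S Pxx)^T *m invmx (subsq S Pxx) *m rows_of S Pxx.
Definition Qxy (S : {set 'I_N}) : 'M[R]_(N, Ny) :=
  Pxy - (rows_of S Pxx)^T *m invmx (subsq S Pxx) *m rows_of S Pxy.
End Defs.

(* Main.v *)
Require Import Defs.
From HB Require Import structures.
From mathcomp Require Import all_boot all_order all_algebra.
Set Implicit Arguments. Unset Strict Implicit. Unset Printing Implicit Defensive.
Import Order.TTheory GRing.Theory Num.Theory.
Local Open Scope ring_scope.

Section Sel.
Variables (R : realFieldType) (N : nat).

Definition sel (S : {set 'I_N}) : 'M[R]_(#|S|, N) :=
  rowsub (fun j : 'I_#|S| => enum_val j) 1%:M.
Definition dm (S : {set 'I_N}) : 'M[R]_N :=
  \matrix_(a, b) ((a == b) && (a \in S))%:R.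

Lemma sum_eq (a : 'I_N) (F : 'I_N -> R) :
  \sum_k ((a == k)%:R * F k) = F a.
Proof.
rewrite (bigD1 a) //= eqxx mul1r big1 ?addr0 // => k /negPf.
by rewrite eq_sym => ->; rewrite mul0r.
Qed.

Lemma sum_eq' (a : 'I_N) (F : 'I_N -> R) :
  \sum_k (F k * (a == k)%:R) = F a.
Proof. by rewrite -[RHS](sum_eq a); apply: eq_bigr => k _; rewrite mulrC. Qed.

Lemma sel_selT S : sel S *m (sel S)^T = 1%:M.
Proof.
apply/matrixP => j k; rewrite !mxE.
under eq_bigr do rewrite !mxE.
by rewrite sum_eq (inj_eq enum_val_inj) eq_sym.
Qed.

Lemma selT_sel S : (sel S)^T *m sel S = dm S.
Proof.
apply/matrixP => a b; rewrite !mxE.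
under eq_bigr do rewrite !mxE.
case: (boolP (a \in S)) => aS.
  rewrite (bigD1 (enum_rank_in aS a)) //= enum_rankK_in // eqxx mul1r andbT.
  rewrite big1 ?addr0 // => j /negPf hj.
  case: eqP => [ea|]; last by rewrite mul0r.
  by have := enum_valK_in aS j; rewrite ea => h; move: hj; rewrite h eqxx.
rewrite andbF big1 // => j _.
case: eqP => [ea|]; last by rewrite mul0r.
by case/negP: aS; rewrite -ea enum_valP.
Qed.

Lemma dm_tr S : (dm S)^T = dm S.
Proof.
apply/matrixP => a b; rewrite !mxE eq_sym.
by case: eqP => // ->.
Qed.

Lemma sel_dm (S T : {set 'I_N}) : S \subset T -> sel S *m dm T = sel S.
Proof.
move=> sST; apply/matrixP => j b; rewrite !mxE.
under eq_bigr do rewrite !mxE.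
by rewrite sum_eq (subsetP sST _ (enum_valP j)) andbT.
Qed.

Lemma dm_selT (S T : {set 'I_N}) : S \subset T -> dm T *m (sel S)^T = (sel S)^T.
Proof. by move=> sST; rewrite -dm_tr -trmx_mul sel_dm. Qed.


Section E.
Variable i : 'I_N.
Let e : 'rV[R]_N := delta_mx 0 i.

Lemma e_eT : e *m e^T = 1%:M.
Proof.
by rewrite /e trmx_delta mul_delta_mx; apply/matrixP => a b; rewrite !ord1 !mxE.
Qed.

Lemma e_dm (T : {set 'I_N}) : i \in T -> e *m dm T = e.
Proof.
move=> iT; apply/matrixP => a b; rewrite ord1 !mxE.
under eq_bigr do rewrite !mxE eqxx /= eq_sym.
by rewrite sum_eq eqxx iT andbT eq_sym.
Qed.

Lemma dm_eT (T : {set 'I_N}) : i \in T -> dm T *m e^T = e^T.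
Proof. by move=> iT; rewrite -dm_tr -trmx_mul e_dm. Qed.

Lemma e_selT (S : {set 'I_N}) : i \notin S -> e *m (sel S)^T = 0.
Proof.
move=> iS; apply/matrixP => a b; rewrite ord1 !mxE.
under eq_bigr do rewrite !mxE eqxx /= eq_sym.
rewrite sum_eq; case: eqP => // ei; case/negP: iS; rewrite -ei enum_valP //.
Qed.

Lemma dm_U1 (S : {set 'I_N}) : i \notin S -> dm (i |: S) = dm S + e^T *m e.
Proof.
move=> iS; rewrite /e trmx_delta mul_delta_mx.
apply/matrixP => a b; rewrite !mxE in_setU1.
case: (eqVneq a b) => [<-|nab] /=.
  rewrite andbb; case: (eqVneq a i) => [->|] /=; first by rewrite (negPf iS) add0r.
  by rewrite addr0.
rewrite add0r; case: (eqVneq a i) => [eai|] //=; case: (eqVneq b i) => [ebi|] //=.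
by case/eqP: nab; rewrite eai ebi.
Qed.
End E.

Section Core.
Variables (k : nat) (A : 'M[R]_N) (ES : 'M[R]_(k, N)) (e : 'rV[R]_N).
Hypotheses (hA : A^T = A) (hee : e *m e^T = 1%:M) (heS : e *m ES^T = 0).
Variables (KS : 'M[R]_k) (FS : 'M[R]_N) (u : 'cV[R]_N) (s : R) (Z : 'M[R]_N).
Hypotheses (dKS : KS = ES *m A *m ES^T) (dFS : FS = ES^T *m invmx KS *m ES)
  (du : u = e^T - FS *m A *m e^T) (ds : s = (e *m A *m u) 0 0)
  (dZ : Z = FS + s^-1 *: (u *m u^T)).
Hypothesis uKS : KS \in unitmx.

Lemma KS_tr : KS^T = KS.
Proof. by rewrite dKS !trmx_mul trmxK hA mulmxA. Qed.

Lemma FS_tr : FS^T = FS.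
Proof. by rewrite dFS !trmx_mul trmxK trmx_inv KS_tr mulmxA. Qed.

Lemma ES_A_FS : ES *m A *m FS = ES.
Proof. by rewrite dFS !mulmxA -dKS mulmxV // mul1mx. Qed.

Lemma ES_A_u : ES *m A *m u = 0.
Proof. by rewrite du mulmxBr !mulmxA ES_A_FS subrr. Qed.

Lemma FS_A_u : FS *m A *m u = 0.
Proof.
by rewrite {1}dFS -!mulmxA (mulmxA ES) ES_A_u !mulmx0.
Qed.

Lemma uT : u^T = e - e *m A *m FS.
Proof. by rewrite du linearB /= !trmx_mul !trmxK hA FS_tr mulmxA. Qed.

Lemma e_u : e *m u = 1%:M.
Proof.
by rewrite du mulmxBr hee dFS !mulmxA heS !mul0mx subr0.
Qed.

Lemma eAu : e *m A *m u = s%:M.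
Proof. rewrite ds; exact: mx11_scalar. Qed.

Hypothesis hs : s != 0.

Lemma eAZ : e *m A *m Z = e.
Proof.
rewrite dZ mulmxDr -scalemxAr mulmxA eAu mul_scalar_mx scalerA mulVf //.
by rewrite scale1r uT addrC subrK.
Qed.

Lemma ESAZ : ES *m A *m Z = ES.
Proof.
by rewrite dZ mulmxDr -scalemxAr mulmxA ES_A_u mul0mx scaler0 addr0 ES_A_FS.
Qed.

Lemma Z_eq : Z = (col_mx ES e)^T *m
  col_mx (invmx KS *m ES - s^-1 *: (invmx KS *m ES *m A *m e^T *m u^T))
         (s^-1 *: u^T).
Proof.
rewrite tr_col_mx mul_row_col mulmxBr -!scalemxAr !mulmxA -dFS.
rewrite dZ {1}du mulmxBl scalerBr.
by rewrite [in RHS]addrAC addrA.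
Qed.

Variables (m : nat) (ET : 'M[R]_(m, N)) (KT : 'M[R]_m) (FT : 'M[R]_N).
Hypotheses (hT1 : ET *m (col_mx ES e)^T *m col_mx ES e = ET)
  (hT2 : col_mx ES e *m ET^T *m ET = col_mx ES e)
  (dKT : KT = ET *m A *m ET^T) (dFT : FT = ET^T *m invmx KT *m ET)
  (uKT : KT \in unitmx).

Lemma FT_Z : FT = Z.
Proof.
set E' := col_mx ES e.
have E'AZ : E' *m A *m Z = E' by rewrite /E' !mul_col_mx ESAZ eAZ.
have hZ : Z = ET^T *m ((E' *m ET^T)^T *m
  col_mx (invmx KS *m ES - s^-1 *: (invmx KS *m ES *m A *m e^T *m u^T))
         (s^-1 *: u^T)).
  by rewrite Z_eq -{1}hT2 trmx_mul mulmxA.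
have ETAZ : ET *m A *m Z = ET.
  by rewrite -{1}hT1 -!mulmxA (mulmxA E') E'AZ mulmxA.
have hW : invmx KT *m ET = (E' *m ET^T)^T *m
  col_mx (invmx KS *m ES - s^-1 *: (invmx KS *m ES *m A *m e^T *m u^T))
         (s^-1 *: u^T).
  have hK : invmx KT *m ET *m A *m ET^T = 1%:M by rewrite -!mulmxA (mulmxA ET) -dKT mulVmx.
  by rewrite -{1}ETAZ {1}hZ !mulmxA hK mul1mx.
by rewrite dFT -mulmxA hW -hZ.
Qed.

Lemma hD : ET^T *m ET *m (col_mx ES e)^T = (col_mx ES e)^T.
Proof. by rewrite -{2}hT2 !trmx_mul trmxK mulmxA. Qed.

Lemma hDe : ET^T *m ET *m e^T = e^T.
Proof. by move: hD; rewrite tr_col_mx mul_mx_row => /eq_row_mx [_ ->]. Qed.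

Lemma hDS : ET^T *m ET *m ES^T = ES^T.
Proof. by move: hD; rewrite tr_col_mx mul_mx_row => /eq_row_mx [-> _]. Qed.

Lemma hDu : ET^T *m ET *m u = u.
Proof. by rewrite du mulmxBr hDe {1}dFS !mulmxA hDS -dFS. Qed.

Lemma hDuT : u^T *m ET^T *m ET = u^T.
Proof. by rewrite -{2}hDu !trmx_mul trmxK mulmxA. Qed.

Lemma uAu : u^T *m A *m u = s%:M.
Proof.
have h0 : e *m A *m FS *m A *m u = 0.
  by rewrite -!mulmxA (mulmxA FS) FS_A_u !mulmx0.
by rewrite {1}uT mulmxBl mulmxBl h0 subr0 eAu.
Qed.

Lemma s_pos : posdef KT -> 0 < s.
Proof.
case=> _ pd; have := pd (ET *m u).
have -> : (ET *m u)^T *m KT *m (ET *m u) = s%:M.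
  rewrite dKT trmx_mul !mulmxA hDuT -!mulmxA (mulmxA ET^T) hDu mulmxA uAu //.
rewrite mxE eqxx mulr1n; apply; apply/negP => /eqP h0.
have : u = 0 by rewrite -hDu -mulmxA h0 mulmx0.
move=> u0; have := e_u; rewrite u0 mulmx0 => /matrixP /(_ 0 0).
by rewrite !mxE eqxx /= => /eqP; rewrite eq_sym oner_eq0.
Qed.

End Core.

Lemma pd_unit n (K : 'M[R]_n) : posdef K -> K \in unitmx.
Proof.
case=> _ pd; rewrite unitmxE unitfE; apply/negP => /det0P [v nv vK].
have hv : v^T != 0 by apply: contra nv => /eqP h; rewrite -[v]trmxK h linear0.
by have := pd _ hv; rewrite trmxK vK mul0mx mxE ltxx.
Qed.

Lemma pd_compress n k (K : 'M[R]_n) (H : 'M[R]_(k, n)) :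
  posdef K -> H *m H^T = 1%:M -> posdef (H *m K *m H^T).
Proof.
case=> sK pd hH; split; first by rewrite !trmx_mul trmxK sK mulmxA.
move=> v nv; have := pd (H^T *m v).
rewrite trmx_mul trmxK !mulmxA; apply.
by apply: contra nv => /eqP h; rewrite -[v]mul1mx -hH -mulmxA h mulmx0.
Qed.

End Sel.

Lemma rows_eq (R : realFieldType) N m (S : {set 'I_N}) (M : 'M[R]_(N, m)) :
  rows_of S M = sel R S *m M.
Proof. by rewrite /rows_of rowsubE. Qed.

Lemma subsq_eq (R : realFieldType) N (S : {set 'I_N}) (M : 'M[R]_N) :
  subsq S M = sel R S *m M *m (sel R S)^T.
Proof.
rewrite /subsq -{1}[M]mulmx1 mxsub_mul rowsubE; congr (_ *m _).
by apply/matrixP => a b; rewrite !mxE eq_sym.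
Qed.

Lemma Pxx_tr (R : realFieldType) N M (X : 'M[R]_(N, M)) l : (Pxx X l)^T = Pxx X l.
Proof. by rewrite /Pxx linearD /= trmx_mul trmxK tr_scalar_mx. Qed.

Section Final.
Variables (R : realFieldType) (N Ny M : nat).
Variables (X : 'M[R]_(N, M)) (Y : 'M[R]_(Ny, M)) (lambda : R).
Let A := Pxx X lambda.
Let B := Pxy X Y.
Let F (S : {set 'I_N}) : 'M[R]_N :=
  (sel R S)^T *m invmx (sel R S *m A *m (sel R S)^T) *m sel R S.

Lemma J_eq S : J X Y lambda S = \tr (B^T *m F S *m B).
Proof.
rewrite /J /F /B /Pxy rows_eq.
have -> : sel R S *m X *m (sel R S *m X)^T + lambda%:M = sel R S *m A *m (sel R S)^T.
  rewrite /A /Pxx mulmxDr mulmxDl mul_mx_scalar -scalemxAl sel_selT.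
  by rewrite trmx_mul !mulmxA scalemx1.
by rewrite !trmx_mul trmxK !mulmxA.
Qed.

Lemma Qxx_eq S : Qxx X lambda S = A - A *m F S *m A.
Proof.
by rewrite /Qxx -/A subsq_eq rows_eq trmx_mul Pxx_tr /F !mulmxA.
Qed.

Lemma Qxy_eq S : Qxy X Y lambda S = B - A *m F S *m B.
Proof.
by rewrite /Qxy -/A -/B subsq_eq !rows_eq trmx_mul Pxx_tr /F !mulmxA.
Qed.
End Final.

Theorem theorem1 (R : realFieldType) (N Ny M : nat)
  (X : 'M[R]_(N, M)) (Y : 'M[R]_(Ny, M)) (lambda : R) (hl : 0 <= lambda)
  (S : {set 'I_N}) (i : 'I_N) (hi : i \notin S)
  (hpd : posdef (subsq (i |: S) (Pxx X lambda))) :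
  J X Y lambda (i |: S) - J X Y lambda S =
    (\sum_(j < Ny) (Qxy X Y lambda S i j) ^+ 2) / (Qxx X lambda S i i).
Proof.
rewrite !J_eq Qxx_eq Qxy_eq.
set A := Pxx X lambda; set B := Pxy X Y.
have hA : A^T = A by exact: Pxx_tr.
set T := i |: S.
set ES := sel R S; set ET := sel R T.
set e : 'rV[R]_N := delta_mx 0 i.
set KS := ES *m A *m ES^T; set KT := ET *m A *m ET^T.
set FS := ES^T *m invmx KS *m ES; set FT := ET^T *m invmx KT *m ET.
set u := e^T - FS *m A *m e^T.
set s := (e *m A *m u) 0 0.
have pdT : posdef KT by move: hpd; rewrite subsq_eq.
have hee : e *m e^T = 1%:M by exact: e_eT.
have heS : e *m ES^T = 0 by exact: e_selT.
have hT1 : ET *m (col_mx ES e)^T *m col_mx ES e = ET.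
  by rewrite -mulmxA tr_col_mx mul_row_col selT_sel -dm_U1 // sel_dm.
have hT2 : col_mx ES e *m ET^T *m ET = col_mx ES e.
  by rewrite -mulmxA selT_sel mul_col_mx sel_dm ?subsetUr // e_dm // setU11.
have uKT : KT \in unitmx by exact: pd_unit.
have uKS : KS \in unitmx.
  apply: pd_unit.
  have -> : KS = (ES *m ET^T) *m KT *m (ES *m ET^T)^T.
    rewrite /KT trmx_mul trmxK !mulmxA -(mulmxA ES) selT_sel sel_dm ?subsetUr //.
    by rewrite -!mulmxA (mulmxA ET^T) selT_sel dm_selT ?subsetUr // mulmxA.
  apply: pd_compress => //.
  by rewrite trmx_mul trmxK !mulmxA -(mulmxA ES) selT_sel sel_dm ?subsetUr // sel_selT.
have spos : 0 < s.
  by apply: (s_pos hA hee heS erefl erefl erefl erefl uKS hT2 erefl).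
have hs : s != 0 by rewrite gt_eqF.
have hFT : FT = FS + s^-1 *: (u *m u^T).
  by apply: (FT_Z hA erefl erefl erefl erefl erefl uKS hs hT1 hT2 erefl erefl uKT).
rewrite hFT mulmxDr mulmxDl mxtraceD addrAC subrr add0r -scalemxAr -scalemxAl mxtraceZ.
have hu : u^T *m B = e *m (B - A *m FS *m B).
  by rewrite (uT hA erefl erefl erefl) mulmxBl mulmxBr !mulmxA.
have hQ : e *m A *m u = e *m (A - A *m FS *m A) *m e^T.
  by rewrite /u !mulmxBr !mulmxBl !mulmxA.
have -> : (A - A *m FS *m A) i i = s.
  by rewrite /s hQ /e trmx_delta -colE -rowE !mxE.
have -> : \sum_(j < Ny) (B - A *m FS *m B) i j ^+ 2
          = ((u^T *m B) *m (u^T *m B)^T) 0 0.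
  rewrite hu -rowE [RHS]mxE; apply: eq_bigr => j _; rewrite !mxE expr2 //.
clearbody B; by rewrite -trace_mx11 trmx_mul trmxK (mxtrace_mulC (u^T *m B)) !mulmxA mulrC.
Qed.
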